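(* Let $F\in\mathbb{R}[x,y,t,s]$ be square-free, with no factor depending only on $(t,s)$, and such that the leading coefficient $A_n(t,s)$ of $F$ with respect to $y$ does not depend on $x$. Let $M(x,t,s)=\sqrt{D_y(F)}$ and $R(t,s)=D_x(M)$, and assume $R$ is not identically zero. Let $t_0\in\mathbb{R}$ be such that $t-t_0$ is not a factor of $R(t,s)$. Then: (i) $A_n(t_0,s)\neq 0$; in particular $\deg_y F(x,y,t_0,s)=\deg_y F$; (ii) $\mathrm{Res}_y(F,F_y)$ specializes well at $t=t_0$, i.e. $\mathrm{Res}_y(F,F_y)(x,t_0,s)=\mathrm{Res}_y\big(F(x,y,t_0,s),F_y(x,y,t_0,s)\big)$, where $F_y=\partial F/\partial y$; (iii) $F(x,y,t_0,s)$ is square-free as a polynomial in the variables $x,y$ (it has no repeated factor of positive degree in $(x,y)$). The analogous statements hold for $s_0\in\mathbb{R}$ such that $s-s_0$ is not a factor of $R(t,s)$, with the specialization $s=s_0$.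
   Context: For a polynomial $G$ and a variable $w$, $D_w(G):=\mathrm{Res}_w(G,\partial G/\partial w)$, and $\sqrt{G}$ denotes the square-free part of $G$. By convention $M:=0$ if $\deg_y F=0$ and $R:=0$ if $\deg_x M=0$. *)

(* Defs.v *)
From mathcomp Require Import all_boot all_order all_algebra.
Set Implicit Arguments. Unset Strict Implicit. Unset Printing Implicit Defensive.
Import Order.TTheory GRing.Theory Num.Theory.
Local Open Scope ring_scope.

(* Variable ordering for R[x,y,t,s]:
     {poly R}                         = R[t]           (variable t)
     {poly {poly R}}                  = R[t][s]        (variable s)
     {poly {poly {poly R}}}           = R[t,s][x]      (variable x)
     {poly {poly {poly {poly R}}}}    = R[t,s,x][y]    (variable y)            *)

Definition rdvd (T : comNzRingType) (a b : T) : Prop := exists c : T, b = c * a.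

(* Square-free: no non-unit g with g^2 | p (units of these polynomial rings are
   exactly the nonzero real constants). *)
Definition sqfree (T : comUnitRingType) (p : T) : Prop :=
  forall g : T, rdvd (g * g) p -> g \is a GRing.unit.

Definition is_sqfree_part (T : comUnitRingType) (G M : T) : Prop :=
  sqfree M /\ rdvd M G /\ exists k : nat, rdvd G (M ^+ k).

Definition Dres (T : comNzRingType) (G : {poly T}) : T := resultant G G^`().

Definition no_ts_factor (R : fieldType) (F : {poly {poly {poly {poly R}}}}) : Prop :=
  forall g : {poly {poly R}}, rdvd (g%:P%:P) F -> g \is a GRing.unit.

(* square-free as a polynomial in x,y (coefficients in R[param]):
   no repeated factor of positive degree in (x,y) *)
Definition sqfree_xy (R : fieldType) (P : {poly {poly {poly R}}}) : Prop :=
  forall g : {poly {poly {poly R}}}, rdvd (g * g) P ->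
    (size g <= 1)%N /\ (size (g`_0)%R <= 1)%N.

Definition spec_t (R : fieldType) (t0 : R) (c : {poly {poly R}}) : {poly R} :=
  map_poly (fun a : {poly R} => a.[t0]) c.      (* result in R[s] *)
Definition spec_s (R : fieldType) (s0 : R) (c : {poly {poly R}}) : {poly R} :=
  c.[s0%:P].                                     (* result in R[t] *)

(* convention: R := 0 if deg_x M = 0 *)
Definition Rconv (R : fieldType) (M : {poly {poly {poly R}}}) : {poly {poly R}} :=
  if (size M <= 1)%N then 0 else Dres M.

(* Main.v *)
Require Import Defs.
From mathcomp Require Import all_boot all_order all_algebra.
From mathcomp Require Import ring zify.
Import Order.TTheory GRing.Theory Num.Theory.
Local Open Scope ring_scope.

Lemma det_col0 (T : comNzRingType) n (A : 'M[T]_n) j :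
  (forall i, A i j = 0) -> \det A = 0.
Proof. by move=> h; rewrite (expand_det_col A j) big1 // => i _; rewrite h mul0r. Qed.

Lemma res_lead0 (A B : comNzRingType) (f : {rmorphism A -> B}) (p q : {poly A}) :
  (1 < size p)%N -> (forall m, ((size p).-1 <= m)%N -> f p`_m = 0) ->
  (forall m, ((size q).-1 <= m)%N -> f q`_m = 0) -> f (resultant p q) = 0.
Proof.
move=> sp hp hq; rewrite /resultant -det_map_mx.
have hj : (((size q).-1 + (size p).-1).-1 < (size q).-1 + (size p).-1)%N.
  rewrite ltn_predL -!subn1; lia.
apply: (@det_col0 _ _ _ (Ordinal hj)) => i; rewrite mxE Sylvester_mxE.
case: splitP => k /= _; rewrite rmorphMn; case: leqP => hk; rewrite ?mulr0n //.
  by rewrite hp ?mul0rn //; have := ltn_ord k; move: hk; move: (nat_of_ord k) => kk; rewrite -!subn1; lia.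
by rewrite hq ?mul0rn //; have := ltn_ord k; move: hk; move: (nat_of_ord k) => kk; rewrite -!subn1; lia.
Qed.

Lemma natr_poly_neq0 (T : nzRingType) n : (n%:R : T) != 0 -> (n%:R : {poly T}) != 0.
Proof. by rewrite -polyC_natr polyC_eq0. Qed.

Lemma natr3_neq0 (R : realFieldType) n : (0 < n)%N ->
  (n%:R : {poly {poly {poly R}}}) != 0 /\ (n%:R : {poly {poly R}}) != 0.
Proof.
move=> hn; have h0 : (n%:R : R) != 0 by rewrite pnatr_eq0 -lt0n.
split; do ?apply: natr_poly_neq0; done.
Qed.

Lemma mulrn_neq0' (T : idomainType) (c : T) n : c != 0 -> (n%:R : T) != 0 -> c *+ n != 0.
Proof. by move=> hc hn; rewrite -mulr_natr mulf_neq0. Qed.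

Lemma coef_ge (T : nzRingType) (r : {poly T}) m :
  ((size r).-1 <= m)%N -> r`_m = 0 \/ m = (size r).-1.
Proof.
rewrite leq_eqVlt => /orP[/eqP->|h]; [by right|left].
apply: nth_default; move: h; move: (size r) => s; lia.
Qed.

Lemma coef_nz_size (T : nzRingType) (r : {poly T}) i : r`_i != 0 -> (i < size r)%N.
Proof. by rewrite ltnNge; apply: contra => h; apply/eqP/nth_default. Qed.

Lemma ar1 a b : (0 < a)%N -> 1%N = (a + b).-1 -> (b <= 1)%N.
Proof. lia. Qed.

Lemma ar2 a b : 1%N = (a + (b + b).-1).-1 -> (0 < a)%N -> (0 < b)%N -> (b <= 1)%N.
Proof. lia. Qed.

Section Core.
Variables (R : realFieldType) (sg : {rmorphism {poly {poly R}} -> {poly R}}).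
Variable d : {poly {poly R}}.
Hypothesis hker : forall c, sg c = 0 -> rdvd d c.

Lemma core (F : {poly {poly {poly {poly R}}}}) (M : {poly {poly {poly R}}}) :
  (size (lead_coef F) <= 1)%N ->
  ((size F <= 1)%N -> M = 0) ->
  ((1 < size F)%N -> is_sqfree_part (Dres F) M) ->
  ~ rdvd d (Rconv M) ->
  [/\ sg (lead_coef F)`_0 != 0,
      size (map_poly (map_poly sg) F) = size F,
      map_poly sg (Dres F) = Dres (map_poly (map_poly sg) F)
    & sqfree_xy (map_poly (map_poly sg) F)].
Proof.
move=> hlc hM0 hpart hnd.
have hF1 : (1 < size F)%N.
  rewrite ltnNge; apply/negP => /hM0 M0; apply: hnd; rewrite M0 /Rconv size_poly0 /=.
  by exists 0; rewrite mul0r.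
have [_ [_ [k [c hc]]]] := hpart hF1.
have hM1 : (1 < size M)%N.
  rewrite ltnNge; apply/negP => h; apply: hnd; rewrite /Rconv h.
  by exists 0; rewrite mul0r.
have RcE : Rconv M = Dres M by rewrite /Rconv leqNgt hM1.
have chain : map_poly sg (Dres F) = 0 -> False.
  move=> h0; apply: hnd; rewrite RcE; apply: hker.
  have hmM : map_poly sg M = 0.
    apply/eqP; have := congr1 (map_poly sg) hc.
    by rewrite rmorphXn rmorphM /= h0 mulr0 => /eqP; rewrite expf_eq0 => /andP[_ ->].
  have cM m : sg M`_m = 0 by rewrite -coef_map hmM coef0.
  by apply: res_lead0 => // m _; rewrite ?coef_deriv ?rmorphMn cM ?mul0rn.
set n := (size F).-1.
set An := (lead_coef F)`_0.
have lcF : lead_coef F = An%:P by rewrite [LHS]size1_polyC.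
have Fn : F`_n = An%:P by [].
have Fnz : F != 0 by rewrite -size_poly_gt0 (ltn_trans _ hF1).
have Anz : An != 0 by rewrite -polyC_eq0 -lcF lead_coef_eq0.
have n0 : (0 < n)%N by rewrite /n -subn1 subn_gt0.
have [nz3 nz2] := natr3_neq0 R n n0.
have dFn : F^`()`_n.-1 = An%:P *+ n by rewrite coef_deriv prednK // Fn.
have szd : size F^`() = n.
  apply/eqP; rewrite eqn_leq; apply/andP; split.
    by rewrite /n -ltnS prednK ?lt_size_deriv // (ltn_trans _ hF1).
  have : F^`()`_n.-1 != 0 by rewrite dFn mulrn_neq0' // polyC_eq0.
  by move/coef_nz_size; rewrite prednK.
have lcd : lead_coef F^`() = An%:P *+ n by rewrite /lead_coef szd.
have hi : sg An != 0.
  apply/negP => /eqP h0; apply: chain.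
  have mC : map_poly sg An%:P = 0 by rewrite map_polyC; apply/eqP; rewrite polyC_eq0; exact/eqP.
  have mCr j : map_poly sg An%:P *+ j = 0 by rewrite mC mul0rn.
  apply: (@res_lead0 _ _ (map_poly sg)) => // m hm.
    case: (@coef_ge _ _ _ hm) => [->|->]; first by rewrite rmorph0.
    by rewrite Fn; exact: mC.
  rewrite coef_deriv rmorphMn.
  have hm' : ((size F).-1 <= m.+1)%N by move: hm; rewrite szd /n; move: (size F) => x; lia.
  case: (@coef_ge _ _ _ hm') => [->|->]; first by rewrite rmorph0 mul0rn.
  by rewrite Fn; exact: mCr.
have flc : map_poly sg (lead_coef F) != 0 by rewrite lcF map_polyC polyC_eq0; exact: hi.
have flcd : map_poly sg (lead_coef F^`()) != 0.
  have e1 : map_poly sg (An%:P) = (sg An)%:P by exact: map_polyC.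
  have e2 : map_poly sg (An%:P *+ n) = map_poly sg (An%:P) *+ n by exact: rmorphMn.
  by rewrite lcd e2 e1 mulrn_neq0' // polyC_eq0; exact: hi.
have hsz : size (map_poly (map_poly sg) F) = size F by rewrite size_map_poly_id0.
have hres : map_poly sg (Dres F) = Dres (map_poly (map_poly sg) F).
  by rewrite /Dres (map_resultant flc flcd) deriv_map.
split => //.
set G := map_poly (map_poly sg) F.
move=> g [c' hG].
have Gnz : G != 0 by rewrite -size_poly_gt0 hsz; lia.
have c'nz : c' != 0 by apply: contraNneq Gnz => c0; rewrite hG c0 mul0r.
have gnz : g != 0 by apply: contraNneq Gnz => g0; rewrite hG g0 mul0r mulr0.
have hg1 : (size g <= 1)%N.
  rewrite leqNgt; apply/negP => hg; apply: chain; rewrite hres.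
  have szG : size G = (size c' + size g + size g - 2)%N.
    rewrite hG !size_mul ?mulf_neq0 //.
    have := size_poly_gt0 c'; have := size_poly_gt0 g; rewrite c'nz gnz.
    by move: (size c') (size g) => a b; lia.
  have n2 : (1 < size G^`())%N.
    rewrite deriv_map size_map_poly_id0 // szd.
    move: hg szG; rewrite hsz /n; have := size_poly_gt0 c'; rewrite c'nz.
    by move: (size F) (size c') (size g) => x y z; lia.
  have G1 : (1 < size G)%N by rewrite hsz.
  have [[u v] /= _ hE] := resultant_in_ideal G1 n2.
  set h := c'^`() * g + c' * g^`() * 2%:R.
  have hGd : G^`() = h * g by rewrite hG !derivM /h; ring.
  have hE' : (resultant G G^`())%:P = (u * (c' * g) + v * h) * g.
    by rewrite hE hGd {1}hG; ring.
  apply/eqP; apply: contraTT hg => /negPf hr; rewrite -leqNgt.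
  have [X0|Xnz] := eqVneq (u * (c' * g) + v * h) 0.
    by move: hE'; rewrite X0 mul0r => /eqP; rewrite polyC_eq0 hr.
  have := congr1 (fun p : {poly _} => size p) hE'; rewrite /= size_polyC hr size_mul //.
  have ha : (0 < size (u * (c' * g) + v * h)%R)%N by rewrite size_poly_gt0.
  move: ha; move: (size (u * (c' * g) + v * h)%R) (size g) => a b /=; apply: ar1.
split => //.
have gE := size1_polyC hg1; set g0 := g`_0 in gE.
have g0nz : g0 != 0 by rewrite -polyC_eq0 -gE.
have : G`_n = c'`_n * (g0 * g0) by rewrite hG gE -polyCM coefMC.
rewrite coef_map /= Fn map_polyC /= => h1.
have cnz : c'`_n != 0 by apply: contra_eq_neq h1 => ->; rewrite mul0r polyC_eq0.
have := congr1 (fun p : {poly _} => size p) h1; rewrite /= size_polyC hi !size_mul ?mulf_neq0 // => hs.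
have ha : (0 < size (c'`_n)%R)%N by rewrite size_poly_gt0.
have hb : (0 < size g0)%N by rewrite size_poly_gt0.
move: hs ha hb.
move: (size (c'`_n)%R) (size g0) => a b /=; apply: ar2.
Qed.
End Core.
Theorem lemma10 (R : realFieldType)
  (F : {poly {poly {poly {poly R}}}}) (M : {poly {poly {poly R}}}) :
  sqfree F ->
  no_ts_factor F ->
  (size (lead_coef F) <= 1)%N ->
  ((size F <= 1)%N -> M = 0) ->
  ((1 < size F)%N -> is_sqfree_part (Dres F) M) ->
  Rconv M != 0 ->
  (forall t0 : R,
     ~ rdvd (('X - t0%:P)%:P) (Rconv M) ->
     [/\ spec_t t0 (lead_coef F)`_0 != 0,
         size (map_poly (map_poly (spec_t t0)) F) = size F,
         map_poly (spec_t t0) (Dres F)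
           = Dres (map_poly (map_poly (spec_t t0)) F)
       & sqfree_xy (map_poly (map_poly (spec_t t0)) F)]) /\
  (forall s0 : R,
     ~ rdvd ('X - (s0%:P)%:P) (Rconv M) ->
     [/\ spec_s s0 (lead_coef F)`_0 != 0,
         size (map_poly (map_poly (spec_s s0)) F) = size F,
         map_poly (spec_s s0) (Dres F)
           = Dres (map_poly (map_poly (spec_s s0)) F)
       & sqfree_xy (map_poly (map_poly (spec_s s0)) F)]).
Proof.
move=> _ _ hlc hM0 hpart _; split.
  move=> t0 hnd.
  have hker : forall c, map_poly (horner_eval t0) c = 0 -> rdvd (('X - t0%:P)%:P) c.
    move=> c hc; exists (\poly_(i < size c) (c`_i %/ ('X - t0%:P))).
    apply/polyP => i; rewrite coefMC coef_poly; case: ltnP => hi.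
      rewrite divpK // dvdp_XsubCl; apply/eqP.
      by have := congr1 (fun p : {poly R} => p`_i) hc; rewrite /= coef_map coef0.
    by rewrite mul0r nth_default.
  exact: (@core R (map_poly (horner_eval t0)) _ hker F M hlc hM0 hpart hnd).
move=> s0 hnd.
have hker : forall c, horner_eval (s0%:P) c = 0 -> rdvd ('X - (s0%:P)%:P) c.
  by move=> c hc; apply/factor_theorem; apply/eqP.
exact: (@core R (horner_eval (s0%:P)) _ hker F M hlc hM0 hpart hnd).
Qed.
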